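(* Let $N\ge3$ and let $K=[-1/N,1/N]\times[-N,N]\subseteq\mathbb R^2$ and $T=[-N,N]\times[-1/N,1/N]\subseteq\mathbb R^2$. Then \[ \gamma_2(\mathrm{conv}\{K\cup T\})\,\gamma_2(K\cap T)<\gamma_2(K)\,\gamma_2(T). \]
   Context: $\gamma_2$ denotes the standard Gaussian probability measure on $\mathbb R^2$, with density proportional to $e^{-\|x\|^2/2}$. $\mathrm{conv}\{S\}$ is the convex hull of $S$. *)

(* Defs.v *)
From HB Require Import structures.
From mathcomp Require Import all_boot all_order all_algebra.
From mathcomp Require Import all_classical all_reals all_analysis.
Set Implicit Arguments. Unset Strict Implicit. Unset Printing Implicit Defensive.
Import Order.TTheory GRing.Theory Num.Theory.
Local Open Scope classical_set_scope.
Local Open Scope ring_scope.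

Definition gamma2 {R : realType} : set (R * R) -> \bar R :=
  ((@normal_prob R 0 1) \x (@normal_prob R 0 1))%E.

Definition convex_hull {R : realType} (S : set (R * R)) : set (R * R) :=
  [set x | exists (n : nat) (w : 'I_n -> R) (p : 'I_n -> R * R),
      (forall i, 0 <= w i) /\ \sum_(i < n) w i = 1 /\ (forall i, S (p i)) /\
      x = (\sum_(i < n) w i * (p i).1, \sum_(i < n) w i * (p i).2)].

Definition rect {R : realType} (a b c d : R) : set (R * R) :=
  [set p | a <= p.1 <= b /\ c <= p.2 <= d].

(* Main.v *)
Require Import Defs.
From HB Require Import structures.
From mathcomp Require Import all_boot all_order all_algebra.
From mathcomp Require Import all_classical all_reals all_analysis.
From mathcomp Require Import measurable_realfun.
From mathcomp Require Import ring lra.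
Import Order.TTheory GRing.Theory Num.Theory.
Local Open Scope classical_set_scope.
Local Open Scope ring_scope.

Lemma int_mono d (T : measurableType d) (R : realType) (mu : {measure set T -> \bar R})
  (f g : T -> \bar R) : (forall x, 0 <= f x)%E -> (forall x, f x <= g x)%E ->
  (\int[mu]_x f x <= \int[mu]_x g x)%E.
Proof.
move=> f0 fg.
have g0 : forall x, (0 <= g x)%E by move=> x; exact: le_trans (f0 x) (fg x).
rewrite !ge0_integralTE //.
apply: ereal_sup_le => _ [h hf <-]; exists h => //= x.
exact: le_trans (hf x) (fg x).
Qed.

Lemma normal_mono (R : realType) (A B : set R) : A `<=` B ->
  (normal_prob 0 1 A <= normal_prob 0 1 B)%E.
Proof.
move=> AB; rewrite /normal_prob integral_mkcond [in X in (_ <= X)%E]integral_mkcond.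
apply: int_mono => x; rewrite /patch.
  by case: ifP => _ //; rewrite lee_fin normal_pdf_ge0.
case: ifP => xA; first by rewrite ifT // inE; apply: AB; rewrite -inE.
by case: ifP => _ //; rewrite lee_fin normal_pdf_ge0.
Qed.

Lemma gamma2_mono (R : realType) (A B : set (R * R)) : A `<=` B ->
  (gamma2 A <= gamma2 B)%E.
Proof.
move=> AB; rewrite /gamma2 /product_measure1.
apply: int_mono => x /=; first exact: measure_ge0.
by apply: normal_mono => y; rewrite /xsection /= !inE; apply: AB.
Qed.

Lemma gamma2X (R : realType) (a b c d : R) :
  gamma2 (rect a b c d) = (normal_prob 0 1 `[a,b] * normal_prob 0 1 `[c,d])%E.
Proof.
have -> : rect a b c d = `[a,b] `*` `[c,d].
  by apply/seteqP; split => -[x y]; rewrite /rect /= !in_itv.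
by rewrite /gamma2 product_measure1E.
Qed.

Lemma normal_itv_gt0 (R : realType) (x y : R) : x < y ->
  (0 < normal_prob 0 1 `[x,y])%E.
Proof.
move=> xy.
pose m0 : R := normal_peak 1 * expR (- (x ^+ 2 + y ^+ 2) / 2).
have m0gt0 : 0 < m0 by rewrite mulr_gt0 ?expR_gt0 ?normal_peak_gt0.
apply: (@lt_le_trans _ _ (\int[lebesgue_measure]_(z in `[x, y]) (cst m0%:E) z)%E).
  rewrite integral_cst //= lebesgue_measure_itv /= lte_fin xy.
  by rewrite -EFinB -EFinM lte_fin mulr_gt0 // subr_gt0.
rewrite /normal_prob; apply: ge0_le_integral => //=.
- by move=> z _; rewrite lee_fin ltW.
- apply/measurable_EFinP; apply: measurable_funTS; exact: measurable_normal_pdf.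
- move=> z; rewrite /= in_itv /= => /andP[xz zy].
  rewrite lee_fin /normal_pdf oner_eq0 /m0 ler_pM2l ?normal_peak_gt0 //.
  rewrite /normal_fun ler_expR subr0 expr1n.
  have h : (z:R) ^+ 2 <= x ^+ 2 + y ^+ 2.
    have [z0|z0] := leP 0 (z:R).
      have : 0 <= (y - z) * (y + z) by apply: mulr_ge0; lra.
      have : 0 <= x ^+ 2 by exact: sqr_ge0.
      rewrite !expr2; lra.
    have : 0 <= (z - x) * (- z - x) by apply: mulr_ge0; lra.
    have : 0 <= y ^+ 2 by exact: sqr_ge0.
    rewrite !expr2; lra.
  lra.
Qed.

Lemma normal_le1 (R : realType) (A : set R) : measurable A ->
  (normal_prob 0 1 A <= 1)%E.
Proof. by move=> mA; apply: probability_le1. Qed.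

Lemma rectE (R : realType) (a b c d : R) : rect a b c d = `[a,b] `*` `[c,d].
Proof. by apply/seteqP; split => -[x y]; rewrite /rect /= !in_itv. Qed.

Lemma conv_lin (R : realType) n (w : 'I_n -> R) (p : 'I_n -> R * R) (al be c : R) :
  (forall i, 0 <= w i) -> \sum_(i < n) w i = 1 ->
  (forall i, al * (p i).1 + be * (p i).2 <= c) ->
  al * (\sum_(i < n) w i * (p i).1) + be * (\sum_(i < n) w i * (p i).2) <= c.
Proof.
move=> w0 w1 hp.
rewrite !big_distrr -big_split /=.
apply: (@le_trans _ _ (\sum_(i < n) w i * c)).
  apply: ler_sum => i _.
  rewrite mulrCA [be * _]mulrCA -mulrDr.
  exact: ler_wpM2l.
rewrite -big_distrl /= w1; lra.
Qed.

Lemma conv_sub (R : realType) (N : R) (hN : 3 <= N) :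
  convex_hull (setU (rect (- N^-1) N^-1 (- N) N) (rect (- N) N (- N^-1) N^-1))
  `<=` rect (- N) N (- N) N `\` rect (N - 1) N (N - 1) N.
Proof.
have Ngt0 : 0 < N by lra.
have i0 : 0 < N^-1 by rewrite invr_gt0.
have i1 : N^-1 < 1 by rewrite invf_lt1 //; lra.
move=> _ [n [w [p [w0 [w1 [hp ->]]]]]].
have H al be c : (forall q, (rect (- N^-1) N^-1 (- N) N `|` rect (- N) N (- N^-1) N^-1) q ->
  al * q.1 + be * q.2 <= c) ->
  al * (\sum_(i < n) w i * (p i).1) + be * (\sum_(i < n) w i * (p i).2) <= c.
  by move=> hq; apply: conv_lin => // i; apply: hq.
have P : forall q : R * R, (rect (- N^-1) N^-1 (- N) N `|` rect (- N) N (- N^-1) N^-1) q ->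
  [/\ -N <= q.1 <= N, -N <= q.2 <= N & q.1 + q.2 <= N + N^-1].
  move=> [u v]; rewrite /rect /= => -[] [/andP[? ?] /andP[? ?]]; split; try (apply/andP; split); lra.
have e1 := H 1 0 N ltac:(move=> q /P [/andP[? ?] /andP[? ?] ?]; lra).
have e2 := H (-1) 0 N ltac:(move=> q /P [/andP[? ?] /andP[? ?] ?]; lra).
have e3 := H 0 1 N ltac:(move=> q /P [/andP[? ?] /andP[? ?] ?]; lra).
have e4 := H 0 (-1) N ltac:(move=> q /P [/andP[? ?] /andP[? ?] ?]; lra).
have e5 := H 1 1 (N + N^-1) ltac:(move=> q /P [/andP[? ?] /andP[? ?] ?]; lra).
move: e1 e2 e3 e4 e5.
set X := \sum_(i < n) _; set Y := \sum_(i < n) _ => e1 e2 e3 e4 e5.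
split; rewrite /rect /=.
  split; apply/andP; split; lra.
move=> [/andP[? ?] /andP[? ?]]; lra.
Qed.

Lemma normal_fin (R : realType) (x y : R) :
  normal_prob 0 1 `[x, y] = (fine (normal_prob 0 1 `[x, y]))%:E /\
  0 <= fine (normal_prob 0 1 `[x, y]) <= 1.
Proof.
have h0 : (0 <= normal_prob 0 1 `[x, y])%E by exact: measure_ge0.
have h1 : (normal_prob 0 1 `[x, y] <= 1)%E by apply: normal_le1.
have hf : normal_prob 0 1 `[x, y] \is a fin_num by rewrite ge0_fin_numE // (le_lt_trans h1) ?ltry.
split; first by rewrite fineK.
by rewrite -lee_fin -(lee_fin _ 1) fineK // h0 h1.
Qed.

Theorem mainTheorem8 (R : realType) (N : R) (hN : 3 <= N) :
  let K := rect (- N^-1) N^-1 (- N) N in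
  let T := rect (- N) N (- N^-1) N^-1 in
  (gamma2 (convex_hull (setU K T)) * gamma2 (setI K T) < gamma2 K * gamma2 T)%E.
Proof.
cbv zeta; set K := rect (- N^-1) N^-1 (- N) N; set T := rect (- N) N (- N^-1) N^-1.
have Ngt0 : 0 < N by lra.
have i0 : 0 < N^-1 by rewrite invr_gt0.
have i1 : N^-1 < 1 by rewrite invf_lt1 //; lra.
have -> : setI K T = rect (- N^-1) N^-1 (- N^-1) N^-1.
  apply/seteqP; split => -[u v]; rewrite /K /T /rect /=.
    by move=> [[/andP[? ?] /andP[? ?]] [/andP[? ?] /andP[? ?]]]; split; apply/andP; split; lra.
  by move=> [/andP[? ?] /andP[? ?]]; split; split; apply/andP; split; lra.
have hc := @conv_sub R N hN; rewrite -/K -/T in hc.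
have mB : measurable (rect (- N) N (- N) N) by rewrite rectE; apply: measurableX.
have mC : measurable (rect (N - 1) N (N - 1) N) by rewrite rectE; apply: measurableX.
have CB : rect (N - 1) N (N - 1) N `<=` rect (- N) N (- N) N.
  by move=> [u v]; rewrite /rect /= => -[/andP[? ?] /andP[? ?]]; split; apply/andP; split; lra.
have gD : gamma2 (rect (- N) N (- N) N `\` rect (N - 1) N (N - 1) N) =
   (gamma2 (rect (- N) N (- N) N) - gamma2 (rect (N - 1) N (N - 1) N))%E.
  rewrite /gamma2 measureD //; last first.
    change (gamma2 (rect (- N) N (- N) N) < +oo)%E; rewrite gamma2X.
    have [-> /andP[? ?]] := @normal_fin _ (- N) N.
    by rewrite -EFinM ltry.
  by rewrite setIidr.
have hg := @gamma2_mono _ _ _ hc; rewrite gD !gamma2X in hg.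
have g0 : (0 <= gamma2 (convex_hull (K `|` T)))%E.
  rewrite /gamma2; exact: measure_ge0.
move: hg g0; rewrite /K /T !gamma2X.
have apos := @normal_itv_gt0 _ (- N^-1) (N^-1) ltac:(lra).
have cpos := @normal_itv_gt0 _ (N - 1) (N) ltac:(lra).
move: apos cpos.
have [-> /andP[a0 a1]] := @normal_fin _ (- N^-1) N^-1.
have [-> /andP[b0 b1]] := @normal_fin _ (- N) N.
have [-> /andP[c0 c1]] := @normal_fin _ (N - 1) N.
set a := fine (normal_prob 0 1 `[- N^-1, N^-1]); set b := fine (normal_prob 0 1 `[- N, N]); set c := fine (normal_prob 0 1 `[N - 1, N]).
set g := gamma2 _.
move=> apos cpos hg g0.
have gfin : g = (fine g)%:E.
  rewrite fineK // ge0_fin_numE //; apply: (le_lt_trans hg); exact: ltry.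
rewrite gfin in hg g0 *.
rewrite -!EFinM -EFinB in hg *; rewrite !lte_fin lee_fin in apos cpos hg g0 *.
have a2 : 0 < a * a by rewrite mulr_gt0.
have c2 : 0 < c * c by rewrite mulr_gt0.
have : fine g * (a * a) <= (b * b - c * c) * (a * a) by rewrite ler_pM2r.
have : (b * b - c * c) * (a * a) < (b * b) * (a * a) by rewrite ltr_pM2r //; lra.
move=> h1 h2.
have -> : a * b * (b * a) = (b * b) * (a * a) by ring.
lra.
Qed.
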